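(* For any budget $\Lambda\ge1$, the total cost of all evaluations performed by the Kometo algorithm (described in the context) does not exceed $\Lambda$.
   Context: Setting: $\mathcal{X}$ is a set with a hierarchical partitioning $\mathcal{P}=(\mathcal{P}_{h,i})_{h\ge0,0\le i\le K^h-1}$, $K\ge2$: $\mathcal{P}_{0,0}=\mathcal{X}$ and the $K$ children $\mathcal{P}_{h+1,Ki+l}$ ($0\le l\le K-1$) of $\mathcal{P}_{h,i}$ partition it. Each cell has a fixed representative $x_{h,i}\in\mathcal{P}_{h,i}$. Fidelities $Z=[0,1]$, functions $f_z:\mathcal{X}\to\mathbb{R}$, a known cost function $\lambda:Z\to[0,+\infty]$, and for each $c\ge1$ an available fidelity $z_c$ with $\lambda(z_c)\le c$; evaluating $f_z(x)$ costs $\lambda(z)$. $\log$ is the natural logarithm. Kometo (input $\mathcal{P}$, $\Lambda$, $\lambda$, oracle access to the $f_z$): set $\tilde\Lambda=\left\lfloor\frac{(e-1)\Lambda}{2Ke(\log\Lambda+1)^2}\right\rfloor$ and $j_{\max}=\lfloor\log\tilde\Lambda\rfloor$. ''Fidelity level $j$'' (integer $j\ge0$) means fidelity $z_{e^j}$. For each cell $(h,i)$ and level $j$ the algorithm keeps a flag $T_{h,i,j}\in\{0,1\}$ (initially $0$) and, when $T_{h,i,j}=1$, the value $f_{h,i,j}=f_{z_{e^j}}(x_{h,i})$. Opening a cell $\mathcal{P}_{h,i}$ at fidelity level $j$ means: for each child $\mathcal{P}_{h+1,i'}$ and each $0\le u\le j$, set $T_{h+1,i',u}=1$, so that $f_{h+1,i',u}=f_{z_{e^u}}(x_{h+1,i'})$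 is evaluated (each (cell, level) value is evaluated at most once). Steps: (1) open the root $\mathcal{P}_{0,0}$ with budget $\tilde\Lambda$ (i.e. at fidelity level $j_{\max}$); (2) exploration: for $h=1,\dots,\lfloor\tilde\Lambda\rfloor$, for $m=1,\dots,\lfloor\tilde\Lambda/h\rfloor$: let $j=\lfloor\log\frac{\tilde\Lambda}{hm}\rfloor$ and open at fidelity level $j$ the not-yet-opened depth-$h$ cell $\mathcal{P}_{h,i}$ with $T_{h,i,j}=1$ having the highest value $f_{h,i,j}$; (3) cross-validation: for $j=0,\dots,j_{\max}$, let $x^c_j$ be the representative $x_{h,i}$ of a cell maximizing $f_{h,i,j}$ over all $(h,i)$ with $T_{h,i,j}=1$, and evaluate $f_{z_{\tilde\Lambda}}(x^c_j)$ (cost at most $\tilde\Lambda$); (4) output $x_\Lambda=\arg\max_{j\in\{0,\dots,j_{\max}\}}f_{z_{\tilde\Lambda}}(x^c_j)$. *)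

(* Defs.v *)
From Stdlib Require Import Reals ZArith List.
From Coquelicot Require Import Rbar.
Import ListNotations.
Open Scope R_scope.

(* pt      : the set X
   K       : branching factor
   cell h i: the cell P_{h,i} (as a predicate on X)
   rep h i : the representative x_{h,i}
   fz z x  : f_z(x)           (fidelities z in Z = [0,1])
   lam z   : cost lambda(z) in [0,+oo]
   zc c    : the available fidelity z_c (for c >= 1) *)
Record setting := Setting {
  pt : Type;
  K : nat;
  cell : nat -> nat -> pt -> Prop;
  rep : nat -> nat -> pt;
  fz : R -> pt -> R;
  lam : R -> Rbar;
  zc : R -> R }.

Definition valid (St : setting) : Prop :=
  (2 <= K St)%nat /\
  (forall x, cell St 0 0 x) /\
  (forall h i x, (i < K St ^ h)%nat ->
     (cell St h i x <-> exists l, (l < K St)%nat /\ cell St (S h) (K St * i + l) x)) /\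
  (forall h i l l' x, (i < K St ^ h)%nat -> (l < K St)%nat -> (l' < K St)%nat ->
     cell St (S h) (K St * i + l) x -> cell St (S h) (K St * i + l') x -> l = l') /\
  (forall h i, (i < K St ^ h)%nat -> cell St h i (rep St h i)) /\
  (forall z, 0 <= z <= 1 -> Rbar_le (Finite 0) (lam St z)) /\
  (forall c, 1 <= c -> 0 <= zc St c <= 1 /\ Rbar_le (lam St (zc St c)) (Finite c)).

Definition Ltilde (K : nat) (Lam : R) : Z :=
  Int_part ((exp 1 - 1) * Lam / (2 * INR K * exp 1 * (ln Lam + 1) ^ 2)).

(* j_max = floor (log Ltilde); when Ltilde = 0 (log undefined) there is no
   fidelity level at all, encoded as j_max = -1. *)
Definition jmax (K : nat) (Lam : R) : Z :=
  if Z.leb 1 (Ltilde K Lam) then Int_part (ln (IZR (Ltilde K Lam))) else (-1)%Z.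

Definition nlevels (K : nat) (Lam : R) : nat := Z.to_nat (jmax K Lam + 1).

Definition zlev (St : setting) (u : nat) : R := zc St (exp (INR u)).

Definition fval (St : setting) (h i u : nat) : R := fz St (zlev St u) (rep St h i).

Record state (X : Type) := State {
  Tflag : nat -> nat -> nat -> bool;
  opened : nat -> nat -> bool;
  calls : list (R * X) }.                (* trace of oracle calls (fidelity, point) *)
Arguments State {X}.
Arguments Tflag {X}.
Arguments opened {X}.
Arguments calls {X}.

Definition init_state (X : Type) : state X :=
  State (fun _ _ _ => false) (fun _ _ => false) [].

Definition eval_cell (St : setting) (st : state (pt St)) (h i u : nat) : state (pt St) :=
  if Tflag st h i u then st
  else State (fun h' i' u' => orb (Nat.eqb h' h && Nat.eqb i' i && Nat.eqb u' u)%bool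
                                  (Tflag st h' i' u'))
             (opened st)
             (calls st ++ [(zlev St u, rep St h i)]).

(* open cell (h,i) with levels 0..nlev-1 (i.e. at fidelity level j = nlev-1) *)
Definition open_cell (St : setting) (st : state (pt St)) (h i nlev : nat) : state (pt St) :=
  let st0 := State (Tflag st)
                   (fun h' i' => orb (Nat.eqb h' h && Nat.eqb i' i)%bool (opened st h' i'))
                   (calls st) in
  fold_left (fun s p => eval_cell St s (S h) (K St * i + fst p) (snd p))
            (list_prod (seq 0 (K St)) (seq 0 nlev)) st0.

Definition schedule (K : nat) (Lam : R) : list (nat * nat) :=
  let L := Z.to_nat (Ltilde K Lam) in
  flat_map (fun h => map (fun m => (h, m))
                          (seq 1 (Z.to_nat (Int_part (INR L / INR h)))))
           (seq 1 L).

Definition explevel (K : nat) (Lam : R) (h m : nat) : nat :=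
  Z.to_nat (Int_part (ln (IZR (Ltilde K Lam) / (INR h * INR m)))).

Inductive explore_step (St : setting) (Lam : R) (st : state (pt St)) :
    nat -> nat -> state (pt St) -> Prop :=
| es_open h m i :
    (i < K St ^ h)%nat ->
    opened st h i = false ->
    Tflag st h i (explevel (K St) Lam h m) = true ->
    (forall i', (i' < K St ^ h)%nat -> opened st h i' = false ->
       Tflag st h i' (explevel (K St) Lam h m) = true ->
       fval St h i' (explevel (K St) Lam h m) <= fval St h i (explevel (K St) Lam h m)) ->
    explore_step St Lam st h m
      (open_cell St st h i (S (explevel (K St) Lam h m)))
| es_skip h m :
    (forall i, (i < K St ^ h)%nat -> opened st h i = false ->
       Tflag st h i (explevel (K St) Lam h m) = false) ->
    explore_step St Lam st h m st.

Inductive explore_run (St : setting) (Lam : R) :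
    state (pt St) -> list (nat * nat) -> state (pt St) -> Prop :=
| er_nil st : explore_run St Lam st [] st
| er_cons st h m rest st' st'' :
    explore_step St Lam st h m st' ->
    explore_run St Lam st' rest st'' ->
    explore_run St Lam st ((h, m) :: rest) st''.

Inductive crossval (St : setting) (Lam : R) (st : state (pt St)) :
    list nat -> list (R * pt St) -> Prop :=
| cv_nil : crossval St Lam st [] []
| cv_cons j js h i rest :
    (i < K St ^ h)%nat ->
    Tflag st h i j = true ->
    (forall h' i', (i' < K St ^ h')%nat -> Tflag st h' i' j = true ->
       fval St h' i' j <= fval St h i j) ->
    crossval St Lam st js rest ->
    crossval St Lam st (j :: js)
      ((zc St (IZR (Ltilde (K St) Lam)), rep St h i) :: rest).

Definition kometo_run (St : setting) (Lam : R) (tr : list (R * pt St)) : Prop :=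
  exists st1 st2 cv,
    st1 = open_cell St (init_state (pt St)) 0 0 (nlevels (K St) Lam) /\
    explore_run St Lam st1 (schedule (K St) Lam) st2 /\
    crossval St Lam st2 (seq 0 (nlevels (K St) Lam)) cv /\
    tr = calls st2 ++ cv.

Definition total_cost (St : setting) (tr : list (R * pt St)) : Rbar :=
  fold_right (fun c acc => Rbar_plus (lam St (fst c)) acc) (Finite 0) tr.

(* Main.v *)
Require Import Defs.
From Stdlib Require Import Reals Lra Lia List ZArith.
From Coquelicot Require Import Rbar.
Import ListNotations.
Open Scope R_scope.

Definition sumL {A} (f : A -> R) (l : list A) : R := fold_right (fun x acc => f x + acc) 0 l.

Lemma sumL_app {A} (f : A -> R) l1 l2 : sumL f (l1 ++ l2) = sumL f l1 + sumL f l2.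
Proof. induction l1; simpl; [lra|]. unfold sumL in *; simpl; rewrite IHl1; lra. Qed.

Lemma sumL_map {A B} (f : B -> R) (g : A -> B) l : sumL f (map g l) = sumL (fun x => f (g x)) l.
Proof. induction l; simpl; auto. unfold sumL in *; simpl; rewrite IHl; lra. Qed.

Lemma sumL_flat_map {A B} (f : B -> R) (g : A -> list B) l :
  sumL f (flat_map g l) = sumL (fun x => sumL f (g x)) l.
Proof. induction l; simpl; auto. rewrite sumL_app, IHl. reflexivity. Qed.

Lemma sumL_le {A} (f g : A -> R) l : (forall x, In x l -> f x <= g x) -> sumL f l <= sumL g l.
Proof. induction l; simpl; intros H; [lra|]. unfold sumL in *; simpl.
  assert (f a <= g a) by (apply H; auto). assert (fold_right (fun x acc => f x + acc) 0 l <= fold_right (fun x acc => g x + acc) 0 l) by (apply IHl; auto). lra. Qed.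

Lemma sumL_scal {A} (f : A -> R) c l : sumL (fun x => c * f x) l = c * sumL f l.
Proof. induction l; simpl; [unfold sumL; simpl; lra|]. unfold sumL in *; simpl; rewrite IHl; lra. Qed.

Lemma sumL_const {A} c (l : list A) : sumL (fun _ => c) l = INR (length l) * c.
Proof. induction l; simpl; [unfold sumL; simpl; lra|]. unfold sumL in *; simpl. rewrite IHl.
  destruct (length l); simpl; lra. Qed.

Lemma sumL_nonneg {A} (f : A -> R) l : (forall x, In x l -> 0 <= f x) -> 0 <= sumL f l.
Proof. intros H. replace 0 with (sumL (fun _ : A => 0) l). apply sumL_le; auto.
  induction l; unfold sumL in *; simpl; auto. rewrite IHl; [lra|]. intros; apply H; simpl; auto. Qed.

Definition cst (St : setting) (c : R * pt St) : R := real (lam St (fst c)).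
Definition good (St : setting) (c : R * pt St) : Prop :=
  lam St (fst c) = Finite (cst St c) /\ 0 <= cst St c.

Lemma tc_fin St tr : Forall (good St) tr -> total_cost St tr = Finite (sumL (cst St) tr).
Proof. induction 1; simpl; auto. unfold total_cost in *. simpl. rewrite IHForall.
  destruct H as [H1 _]. rewrite H1. reflexivity. Qed.

Lemma lam_bound St c x : valid St -> 1 <= c ->
  good St (zc St c, x) /\ cst St (zc St c, x) <= c.
Proof. intros V Hc. destruct V as (_&_&_&_&_&Hl&Hz).
  destruct (Hz c Hc) as [Hr Hle]. specialize (Hl _ Hr).
  unfold good, cst; simpl. destruct (lam St (zc St c)); simpl in *; try contradiction.
  split; [split; auto| auto]. Qed.

Lemma exp_INR_ge1 u : 1 <= exp (INR u).
Proof. pose proof (exp_ineq1_le (INR u)). pose proof (pos_INR u). lra. Qed.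

Definition adds {X} (st st' : state X) (P : list (R * X) -> Prop) :=
  exists extra, calls st' = calls st ++ extra /\ P extra.

Definition bnd St (w : R) (l : list (R * pt St)) := Forall (good St) l /\ sumL (cst St) l <= w.

Lemma eval_bnd St st h i u : valid St ->
  adds st (eval_cell St st h i u) (bnd St (exp (INR u))).
Proof. intros V. unfold eval_cell. destruct (Tflag st h i u).
  - exists []. rewrite app_nil_r. split; auto. split; auto. unfold sumL; simpl.
    pose proof (exp_INR_ge1 u); lra.
  - exists [(zlev St u, rep St h i)]. split; auto. unfold zlev.
    destruct (lam_bound St (exp (INR u)) (rep St h i) V (exp_INR_ge1 u)) as [G B].
    split; auto. unfold sumL; simpl. lra. Qed.

Lemma fold_bnd St (F : state (pt St) -> nat * nat -> state (pt St)) (w : nat * nat -> R) :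
  (forall s p, adds s (F s p) (bnd St (w p))) ->
  forall l st, adds st (fold_left F l st) (bnd St (sumL w l)).
Proof. intros HF l. induction l as [|p l IH]; intros st; simpl.
  - exists []. rewrite app_nil_r. split; auto. split; auto. unfold sumL; simpl; lra.
  - destruct (HF st p) as (e1 & E1 & G1 & B1).
    destruct (IH (F st p)) as (e2 & E2 & G2 & B2).
    exists (e1 ++ e2). rewrite E2, E1, app_assoc. split; auto. split.
    + apply Forall_app; auto.
    + rewrite sumL_app. unfold sumL at 3. simpl. fold (sumL w l). lra. Qed.

Lemma E_gt2 : 2 < exp 1.
Proof. pose proof (exp_ineq1 1 ltac:(lra)). lra. Qed.

Lemma exp_S n : exp (INR (S n)) = exp (INR n) * exp 1.
Proof. rewrite S_INR, exp_plus. reflexivity. Qed.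

Lemma geom n : sumL (fun u => exp (INR u)) (seq 0 n) * (exp 1 - 1) = exp (INR n) - 1.
Proof. induction n.
  - unfold sumL; simpl. rewrite exp_0. lra.
  - rewrite seq_S, sumL_app, exp_S. unfold sumL at 2; simpl. lra. Qed.

Lemma geom' n : sumL (fun u => exp (INR u)) (seq 0 n) = (exp (INR n) - 1) / (exp 1 - 1).
Proof. pose proof E_gt2. rewrite <- geom. field. lra. Qed.

Lemma sum_prod (l1 l2 : list nat) :
  sumL (fun p : nat * nat => exp (INR (snd p))) (list_prod l1 l2)
  = INR (length l1) * sumL (fun u => exp (INR u)) l2.
Proof. induction l1; simpl. unfold sumL; simpl; lra.
  rewrite sumL_app, sumL_map, IHl1. simpl. destruct (length l1); simpl; lra. Qed.

Lemma open_bnd St st h i n : valid St ->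
  adds st (open_cell St st h i n)
    (bnd St (INR (K St) * ((exp (INR n) - 1) / (exp 1 - 1)))).
Proof. intros V. unfold open_cell.
  destruct (fold_bnd St (fun s p => eval_cell St s (S h) (K St * i + fst p) (snd p))
             (fun p => exp (INR (snd p)))
             (fun s p => eval_bnd St s _ _ _ V)
             (list_prod (seq 0 (K St)) (seq 0 n))
             (State (Tflag st) (fun h' i' => (Nat.eqb h' h && Nat.eqb i' i) || opened st h' i')%bool (calls st)))
    as (e & E & G & B).
  exists e. split; [exact E|]. split; auto.
  rewrite sum_prod, seq_length, geom' in B. exact B. Qed.

Definition wexp (K : nat) (Lam : R) (p : nat * nat) : R :=
  INR K * ((exp (INR (S (explevel K Lam (fst p) (snd p)))) - 1) / (exp 1 - 1)).

Lemma wexp_nonneg K Lam p : 0 <= wexp K Lam p.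
Proof. unfold wexp. pose proof E_gt2. pose proof (exp_INR_ge1 (S (explevel K Lam (fst p) (snd p)))).
  apply Rmult_le_pos; [apply pos_INR|]. apply Rmult_le_pos; [lra|].
  apply Rlt_le, Rinv_0_lt_compat; lra. Qed.

Lemma step_bnd St Lam st h m st' : valid St -> explore_step St Lam st h m st' ->
  adds st st' (bnd St (wexp (K St) Lam (h, m))).
Proof. intros V Hs. destruct Hs.
  - apply (open_bnd St st h i _ V).
  - exists []. rewrite app_nil_r. split; auto. split; auto. unfold sumL; simpl.
    apply wexp_nonneg. Qed.

Lemma run_bnd St Lam st l st' : valid St -> explore_run St Lam st l st' ->
  adds st st' (bnd St (sumL (wexp (K St) Lam) l)).
Proof. intros V Hr. induction Hr.
  - exists []. rewrite app_nil_r. split; auto. split; auto. unfold sumL; simpl; lra.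
  - destruct (step_bnd _ _ _ _ _ _ V H) as (e1 & E1 & G1 & B1).
    destruct IHHr as (e2 & E2 & G2 & B2).
    exists (e1 ++ e2). rewrite E2, E1, app_assoc. split; auto. split.
    + apply Forall_app; auto.
    + rewrite sumL_app. unfold sumL at 3. simpl. fold (sumL (wexp (K St) Lam) rest). lra. Qed.

Lemma cv_shape St Lam st js cv : crossval St Lam st js cv ->
  length cv = length js /\ Forall (fun c => fst c = zc St (IZR (Ltilde (K St) Lam))) cv.
Proof. induction 1; simpl; auto. destruct IHcrossval; split; auto. Qed.

Lemma cv_bnd St Lam st js cv : valid St -> crossval St Lam st js cv ->
  1 <= IZR (Ltilde (K St) Lam) ->
  bnd St (INR (length js) * IZR (Ltilde (K St) Lam)) cv.
Proof. intros V H H1. destruct (cv_shape _ _ _ _ _ H) as [Hl HF]. rewrite <- Hl. clear H Hl.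
  induction HF as [|[z x] cv Hz HF IH].
  - split; auto. unfold sumL; simpl; lra.
  - simpl in Hz; subst z. destruct IH as [G B].
    destruct (lam_bound St _ x V H1) as [G1 B1]. split; auto.
    unfold sumL in *; simpl length. rewrite S_INR. simpl. lra. Qed.

Lemma exp_mono x y : x <= y -> exp x <= exp y.
Proof. intros H. destruct (Rle_lt_or_eq_dec _ _ H). apply Rlt_le, exp_increasing; auto. subst; lra. Qed.

Lemma ln_mono x y : 0 < x -> x <= y -> ln x <= ln y.
Proof. intros H0 H. destruct (Rle_lt_or_eq_dec _ _ H). apply Rlt_le, ln_increasing; auto. subst; lra. Qed.

Lemma ln_ineq y : 0 < y -> ln y <= y - 1.
Proof. intros. pose proof (exp_ineq1_le (ln y)). rewrite exp_ln in H0; lra. Qed.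

Lemma sumL_ext {A} (f g : A -> R) l : (forall x, In x l -> f x = g x) -> sumL f l = sumL g l.
Proof. intros H; apply Rle_antisym; apply sumL_le; intros x Hx; rewrite (H x Hx); lra. Qed.

Definition H (n : nat) : R := sumL (fun m => / INR m) (seq 1 n).

Lemma harm n : (1 <= n)%nat -> H n <= 1 + ln (INR n).
Proof. induction n; intros Hn; [lia|]. destruct n.
  - unfold H, sumL; simpl. rewrite ln_1. lra.
  - unfold H in *. rewrite seq_S, sumL_app. unfold sumL at 2. cbn [fold_right].
    assert (IH := IHn ltac:(lia)).
    replace (1 + S n)%nat with (S (S n)) by lia.
    assert (Hp : 0 < INR (S n)) by (apply lt_0_INR; lia).
    assert (Hq : INR (S (S n)) = INR (S n) + 1) by (apply S_INR).
    pose proof (ln_ineq (INR (S n) / INR (S (S n))) ltac:(apply Rdiv_lt_0_compat; lra)).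
    unfold Rdiv in H0. rewrite ln_mult, ln_Rinv in H0; try lra.
    2: apply Rinv_0_lt_compat; lra.
    assert (INR (S n) * / INR (S (S n)) - 1 = - / INR (S (S n))) by (rewrite Hq; field; lra).
    lra. Qed.

Lemma harm' n x : 1 <= x -> INR n <= x -> H n <= 1 + ln x.
Proof. intros H1 H2. destruct n.
  - unfold H, sumL; simpl. pose proof (ln_mono 1 x ltac:(lra) H1). rewrite ln_1 in H0. lra.
  - pose proof (harm (S n) ltac:(lia)). pose proof (ln_mono (INR (S n)) x ltac:(apply lt_0_INR; lia) H2). lra. Qed.

Lemma Int_part_nonneg x : 0 <= x -> (0 <= Int_part x)%Z.
Proof. intros Hx. destruct (base_Int_part x). assert (-1 < IZR (Int_part x)) by lra.
  apply lt_IZR in H2. lia. Qed.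

Lemma INR_to_nat z : (0 <= z)%Z -> INR (Z.to_nat z) = IZR z.
Proof. intros. rewrite INR_IZR_INZ, Z2Nat.id; auto. Qed.

Lemma sched_in K Lam h m : (0 <= Ltilde K Lam)%Z -> In (h,m) (schedule K Lam) ->
  (1 <= h <= Z.to_nat (Ltilde K Lam))%nat /\ (1 <= m)%nat /\
  INR h * INR m <= IZR (Ltilde K Lam).
Proof. intros H0 Hin. unfold schedule in Hin. apply in_flat_map in Hin.
  destruct Hin as (h' & Hh & Hm). apply in_map_iff in Hm. destruct Hm as (m' & E & Hm).
  inversion E; subst h' m'. clear E. apply in_seq in Hh. apply in_seq in Hm.
  set (L := Z.to_nat (Ltilde K Lam)) in *.
  set (z := Int_part (INR L / INR h)) in *.
  assert (Hz : (1 <= z)%Z) by lia.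
  assert (HL : INR L = IZR (Ltilde K Lam)) by (apply INR_to_nat; auto).
  assert (Hhp : 0 < INR h) by (apply lt_0_INR; lia).
  assert (INR m <= IZR z).
  { rewrite <- INR_to_nat by lia. apply le_INR. lia. }
  destruct (base_Int_part (INR L / INR h)) as [B _]. fold z in B.
  split; [lia|]. split; [lia|]. rewrite <- HL.
  assert (Hmle : INR m <= INR L / INR h) by lra.
  apply (Rmult_le_compat_l (INR h)) in Hmle; [|lra].
  replace (INR h * (INR L / INR h)) with (INR L) in Hmle by (field; lra). lra. Qed.

Lemma wexp_le K Lam h m : (0 <= Ltilde K Lam)%Z -> In (h,m) (schedule K Lam) ->
  wexp K Lam (h,m) <= INR K * (exp 1 / (exp 1 - 1)) * (IZR (Ltilde K Lam) * / (INR h * INR m)).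
Proof. intros H0 Hin. destruct (sched_in _ _ _ _ H0 Hin) as (Hh & Hm & Hhm).
  assert (Hhp : 0 < INR h) by (apply lt_0_INR; lia).
  assert (Hmp : 0 < INR m) by (apply lt_0_INR; lia).
  assert (Hp : 0 < INR h * INR m) by nra.
  set (y := IZR (Ltilde K Lam) * / (INR h * INR m)).
  assert (Hy : 1 <= y).
  { unfold y. apply (Rmult_le_reg_r (INR h * INR m)); auto.
    rewrite Rmult_assoc, Rinv_l by lra. lra. }
  unfold wexp, explevel; simpl fst; simpl snd. fold (Rdiv (IZR (Ltilde K Lam)) (INR h * INR m)).
  unfold Rdiv; fold y.
  pose proof (ln_mono 1 y ltac:(lra) Hy) as Hl. rewrite ln_1 in Hl.
  pose proof (Int_part_nonneg _ Hl) as Hi.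
  destruct (base_Int_part (ln y)) as [B _].
  rewrite exp_S, INR_to_nat by auto.
  pose proof (exp_mono _ _ B) as Hb. rewrite exp_ln in Hb by lra.
  pose proof E_gt2 as HE2. pose proof (pos_INR K) as HK0.
  assert (HW : exp (IZR (Int_part (ln y))) * exp 1 - 1 <= exp 1 * y) by nra.
  unfold Rdiv. 
  apply Rmult_le_compat_l with (r := INR K) in HW; auto.
  apply Rmult_le_compat_r with (r := / (exp 1 - 1)) in HW.
  2: apply Rlt_le, Rinv_0_lt_compat; lra.
  replace (INR K * (exp 1 * / (exp 1 - 1)) * y) with (INR K * (exp 1 * y) * / (exp 1 - 1)) by ring.
  lra. Qed.

Lemma sched_sum K Lam : (1 <= Ltilde K Lam)%Z ->
  sumL (fun p => / (INR (fst p) * INR (snd p))) (schedule K Lam) <= (1 + ln (IZR (Ltilde K Lam)))^2.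
Proof. intros H1. set (l := IZR (Ltilde K Lam)).
  assert (Hl : 1 <= l) by (apply IZR_le in H1; auto).
  set (L := Z.to_nat (Ltilde K Lam)).
  assert (HL : INR L = l) by (apply INR_to_nat; lia).
  assert (Hln : 0 <= ln l) by (pose proof (ln_mono 1 l ltac:(lra) Hl); rewrite ln_1 in *; lra).
  unfold schedule. fold L. rewrite sumL_flat_map.
  apply Rle_trans with (sumL (fun h => (1 + ln l) * / INR h) (seq 1 L)).
  - apply sumL_le. intros h Hh. apply in_seq in Hh.
    assert (Hhp : 0 < INR h) by (apply lt_0_INR; lia).
    assert (Hh1 : 1 <= INR h) by (replace 1 with (INR 1) by reflexivity; apply le_INR; lia).
    rewrite sumL_map. simpl.
    rewrite (sumL_ext _ (fun m => / INR h * / INR m)).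
    2: { intros; apply Rinv_mult. }
    rewrite sumL_scal. rewrite Rmult_comm. apply Rmult_le_compat_r; [apply Rlt_le, Rinv_0_lt_compat; lra|].
    apply harm'; auto.
    set (z := Int_part (INR L / INR h)).
    destruct (base_Int_part (INR L / INR h)) as [B _]. fold z in B.
    assert (INR L / INR h <= INR L).
    { unfold Rdiv. rewrite <- (Rmult_1_r (INR L)) at 2. apply Rmult_le_compat_l; [apply pos_INR|].
      rewrite <- Rinv_1. apply Rinv_le_contravar; lra. }
    destruct (Z_le_gt_dec 0 z).
    + rewrite INR_to_nat by auto. lra.
    + replace (Z.to_nat z) with 0%nat by lia. simpl. lra.
  - rewrite sumL_scal. fold (H L). pose proof (harm L ltac:(lia)) as HH. rewrite HL in HH.
    replace ((1 + ln l)^2) with ((1 + ln l) * (1 + ln l)) by ring.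
    apply Rmult_le_compat_l; lra. Qed.

Lemma final_arith (E k l Lam a b s1 s2 s3 : R) :
  2 < E -> 2 <= k -> 1 <= l -> 2 <= a -> 0 <= b <= a ->
  l * (2 * k * E * a^2) <= (E - 1) * Lam ->
  s1 * (E - 1) <= k * E * l -> s2 * (E - 1) <= k * E * l * b^2 -> s3 <= b * l ->
  s1 + s2 + s3 <= Lam.
Proof. intros HE Hk Hl Ha Hb Hmain H1 H2 H3.
  assert (Hb2 : b^2 <= a^2) by nra.
  assert (kE : 0 < k * E) by (apply Rmult_lt_0_compat; lra).
  assert (kEl : 0 < k * E * l) by (apply Rmult_lt_0_compat; lra).
  assert (A1 : k * E * l * b^2 <= k * E * l * a^2) by (apply Rmult_le_compat_l; lra).
  assert (A2 : s3 * (E - 1) <= a * l * (k * E / 2)).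
  { assert (s3 * (E-1) <= b * l * (E-1)) by (apply Rmult_le_compat_r; lra).
    assert (b * l * (E - 1) <= a * l * (E-1)) by (apply Rmult_le_compat_r; [lra|]; apply Rmult_le_compat_r; lra).
    assert (a * l * (E - 1) <= a * l * (k * E / 2)) by (apply Rmult_le_compat_l; nra). lra. }
  assert (A3 : 1 + a / 2 <= a^2) by nra.
  assert (A4 : k * E * l * (1 + a/2) <= k * E * l * a^2) by (apply Rmult_le_compat_l; lra).
  assert (A5 : k * E * l * a ^ 2 * 2 = l * (2 * k * E * a ^ 2)) by ring.
  assert (A6 : (s1 + s2 + s3) * (E - 1) <= (E - 1) * Lam).
  { assert (a * l * (k * E / 2) = k * E * l * (a/2)) by field.
    assert (k * E * l * (1 + a/2) = k * E * l + k * E * l * (a/2)) by ring. nra. }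
  apply (Rmult_le_reg_r (E - 1)); lra. Qed.

Theorem proposition2 :
  forall (St : setting) (Lam : R) (tr : list (R * pt St)),
    valid St -> 1 <= Lam ->
    kometo_run St Lam tr ->
    Rbar_le (total_cost St tr) (Finite Lam).
Proof.
  intros St Lam tr V HLam (st1 & st2 & cv & E1 & Hr & Hc & Et).
  assert (HK : 2 <= INR (K St)) by (replace 2 with (INR 2) by reflexivity; apply le_INR; apply (proj1 V)).
  pose proof E_gt2 as HE. pose proof exp_le_3 as HE3.
  assert (Hln : 0 <= ln Lam) by (pose proof (ln_mono 1 Lam ltac:(lra) HLam); rewrite ln_1 in *; lra).
  set (a := ln Lam + 1) in *.
  set (D := 2 * INR (K St) * exp 1 * a ^ 2).
  assert (HD : 0 < D).
  { unfold D. assert (0 < a^2) by (unfold a; apply pow_lt; lra).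
    apply Rmult_lt_0_compat; auto. apply Rmult_lt_0_compat; lra. }
  assert (Hx : 0 <= (exp 1 - 1) * Lam / D).
  { unfold Rdiv. apply Rmult_le_pos; [apply Rmult_le_pos; lra|]. apply Rlt_le, Rinv_0_lt_compat; auto. }
  assert (HLt0 : (0 <= Ltilde (K St) Lam)%Z) by (apply Int_part_nonneg; exact Hx).
  destruct (base_Int_part ((exp 1 - 1) * Lam / D)) as [BL _].
  fold D in BL. change (Int_part ((exp 1 - 1) * Lam / D)) with (Ltilde (K St) Lam) in BL.
  set (l := IZR (Ltilde (K St) Lam)) in *.
  assert (Hmain : l * D <= (exp 1 - 1) * Lam).
  { apply (Rmult_le_compat_r D) in BL; [|lra]. unfold Rdiv in BL.
    rewrite Rmult_assoc, Rinv_l in BL by lra. lra. }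
  destruct (open_bnd St (init_state (pt St)) 0 0 (nlevels (K St) Lam) V) as (e1 & Ee1 & G1 & B1).
  rewrite <- E1 in Ee1. simpl in Ee1.
  destruct (run_bnd St Lam _ _ _ V Hr) as (e2 & Ee2 & G2 & B2).
  rewrite Ee2, Ee1 in Et.
  destruct (Z.eq_dec (Ltilde (K St) Lam) 0) as [Z0 | Z1].
  -
    assert (Hn : nlevels (K St) Lam = 0%nat) by (unfold nlevels, jmax; rewrite Z0; reflexivity).
    assert (Hs : schedule (K St) Lam = []) by (unfold schedule; rewrite Z0; reflexivity).
    rewrite Hn in B1, Hc. rewrite Hs in B2. simpl in Hc. inversion Hc; subst cv.
    rewrite Et, !app_nil_r. rewrite tc_fin by (apply Forall_app; auto).
    simpl. rewrite sumL_app. simpl in B1. rewrite exp_0 in B1. unfold sumL in B2 at 2; simpl in B2.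
    replace (INR (K St) * ((1 - 1) / (exp 1 - 1))) with 0 in B1 by (field; lra). lra.
  - assert (Hl1 : (1 <= Ltilde (K St) Lam)%Z) by lia.
    assert (Hl : 1 <= l) by (apply IZR_le in Hl1; auto).
    set (J := Int_part (ln l)).
    assert (Hlnl : 0 <= ln l) by (pose proof (ln_mono 1 l ltac:(lra) Hl); rewrite ln_1 in *; lra).
    assert (HJ : (0 <= J)%Z) by (apply Int_part_nonneg; auto).
    destruct (base_Int_part (ln l)) as [BJ _]. fold J in BJ.
    assert (Hn : nlevels (K St) Lam = Z.to_nat (J + 1)).
    { unfold nlevels, jmax. replace (Z.leb 1 (Ltilde (K St) Lam)) with true by (symmetry; apply Z.leb_le; auto). reflexivity. }
    assert (HnR : INR (nlevels (K St) Lam) = IZR J + 1).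
    { rewrite Hn, INR_to_nat by lia. rewrite plus_IZR. reflexivity. }
    assert (Hexpn : exp (INR (nlevels (K St) Lam)) <= l * exp 1).
    { rewrite HnR, exp_plus. apply Rmult_le_compat_r; [lra|].
      pose proof (exp_mono _ _ BJ) as HeJ. rewrite exp_ln in HeJ by lra. exact HeJ. }
    pose proof (cv_bnd St Lam st2 _ cv V Hc Hl) as [G3 B3].
    pose proof (length_seq (nlevels (K St) Lam) 0) as HLs.
    assert (B3x : sumL (cst St) cv <= (IZR J + 1) * l).
    { eapply Rle_trans; [exact B3|]. rewrite HLs, HnR. apply Rle_refl. }
    clear B3. rename B3x into B3.
    rewrite Et. rewrite (tc_fin St ((e1 ++ e2) ++ cv)) by (apply Forall_app; split; [apply Forall_app; split; [exact G1 | exact G2] | exact G3]).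
    change (sumL (cst St) ((e1 ++ e2) ++ cv) <= Lam). rewrite !sumL_app.
    assert (B2' : sumL (cst St) e2 * (exp 1 - 1) <= INR (K St) * exp 1 * l * (1 + ln l)^2).
    { assert (S1 : sumL (wexp (K St) Lam) (schedule (K St) Lam) <=
              (INR (K St) * (exp 1 / (exp 1 - 1)) * l) * sumL (fun p => / (INR (fst p) * INR (snd p))) (schedule (K St) Lam)).
      { rewrite <- sumL_scal. apply sumL_le. intros [h m] Hin.
        rewrite Rmult_assoc. apply wexp_le; auto. }
      pose proof (sched_sum (K St) Lam Hl1) as S2. fold l in S2.
      assert (0 <= INR (K St) * (exp 1 / (exp 1 - 1)) * l).
      { unfold Rdiv. apply Rmult_le_pos; [|lra]. apply Rmult_le_pos; [lra|].
        apply Rmult_le_pos; [lra|]. apply Rlt_le, Rinv_0_lt_compat; lra. }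
      assert (S3 : sumL (cst St) e2 <= INR (K St) * (exp 1 / (exp 1 - 1)) * l * (1 + ln l)^2).
      { eapply Rle_trans; [exact B2|]. eapply Rle_trans; [exact S1|].
        apply Rmult_le_compat_l; auto. }
      apply (Rmult_le_compat_r (exp 1 - 1)) in S3; [|lra].
      replace (INR (K St) * (exp 1 / (exp 1 - 1)) * l * (1 + ln l) ^ 2 * (exp 1 - 1))
        with (INR (K St) * exp 1 * l * (1 + ln l)^2) in S3 by (field; lra). exact S3. }
    assert (B1' : sumL (cst St) e1 * (exp 1 - 1) <= INR (K St) * exp 1 * l).
    { apply (Rmult_le_compat_r (exp 1 - 1)) in B1; [|lra].
      replace (INR (K St) * ((exp (INR (nlevels (K St) Lam)) - 1) / (exp 1 - 1)) * (exp 1 - 1))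
        with (INR (K St) * (exp (INR (nlevels (K St) Lam)) - 1)) in B1 by (field; lra).
      eapply Rle_trans; [exact B1|]. rewrite Rmult_assoc. apply Rmult_le_compat_l; lra. }
    assert (Ha1 : 1 <= a) by (unfold a; lra).
    assert (HD4 : 4 * exp 1 <= D).
    { unfold D. assert (1 <= a^2) by (rewrite <- (pow1 2); apply pow_incr; lra).
      replace (4 * exp 1) with ((2 * 2 * exp 1) * 1) by ring.
      apply Rmult_le_compat; try lra. apply Rmult_le_compat_r; lra. }
    assert (H4E : 4 * exp 1 <= (exp 1 - 1) * Lam).
    { assert (D <= l * D) by (rewrite <- (Rmult_1_l D) at 1; apply Rmult_le_compat_r; lra). lra. }
    assert (HLam4 : 3 < Lam).
    { destruct (Rle_lt_dec Lam 3); auto.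
      assert ((exp 1 - 1) * Lam <= (exp 1 - 1) * 3) by (apply Rmult_le_compat_l; lra). lra. }
    assert (Ha2 : 2 <= a).
    { pose proof (ln_mono (exp 1) Lam ltac:(lra) ltac:(lra)) as HlE. rewrite ln_exp in HlE. unfold a; lra. }
    assert (HlL : l <= Lam).
    { assert (l * (exp 1 - 1) <= l * D) by (apply Rmult_le_compat_l; lra).
      apply (Rmult_le_reg_r (exp 1 - 1)); lra. }
    assert (Hb : 1 + ln l <= a) by (pose proof (ln_mono l Lam ltac:(lra) HlL); unfold a; lra).
    assert (B3' : sumL (cst St) cv <= (1 + ln l) * l).
    { eapply Rle_trans; [exact B3|]. apply Rmult_le_compat_r; lra. }

    apply (final_arith (exp 1) (INR (K St)) l Lam a (1 + ln l)); auto; try lra.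

Qed.
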